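(* Let $m$ be an integer with $m=3$ or $m\geqslant 5$, and let $\mathcal{H}_m$ be the binary Hamming code of length $n=2^m-1$ (an $[n,n-m,3]$ code). Then $\mathcal{H}_m$ is log-concave.
   Context: The binary Hamming code $\mathcal{H}_m$ is the binary linear code of length $2^m-1$ whose parity-check matrix has as columns all $2^m-1$ nonzero vectors of $\mathbb{F}_2^m$ (equivalently, the dual of the binary simplex code). For a linear code $\mathcal C$ of length $n$, $A_i$ denotes the number of codewords of Hamming weight $i$. The nonzero weight distribution of $\mathcal C$ is the subsequence $a_0,a_1,\dots,a_N$ of $A_0,A_1,\dots,A_n$ consisting of the nonzero values, in their order of appearance (so $a_0=A_0=1$). A sequence $a_0,\dots,a_N$ is log-concave if $a_i^2\geqslant a_{i-1}a_{i+1}$ for all $1\leqslant i\leqslant N-1$. A linear code is called log-concave if its nonzero weight distribution is log-concave. *)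

(* Defs.v *)
From mathcomp Require Import all_boot all_algebra.
Set Implicit Arguments. Unset Strict Implicit. Unset Printing Implicit Defensive.
Import GRing.Theory.
Local Open Scope ring_scope.

Definition hweight (n : nat) (x : 'rV['F_2]_n) : nat := #|[set j | x ord0 j != 0%R]|.

(* Parity-check matrix of the binary Hamming code H_m: an m x (2^m - 1) matrix
   whose j-th column (j = 0 .. 2^m-2) is the binary expansion of j+1
   (bit i in row i). Its columns are exactly all nonzero vectors of F_2^m. *)
Definition hamming_pcm (m : nat) : 'M['F_2]_(m, 2 ^ m - 1) :=
  \matrix_(i < m, j < 2 ^ m - 1) (odd ((j.+1) %/ 2 ^ i))%:R.

Definition hamming_code (m : nat) : {set 'rV['F_2]_(2 ^ m - 1)} :=
  [set x | x *m (hamming_pcm m)^T == 0].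

Definition weight_count (n : nat) (C : {set 'rV['F_2]_n}) (i : nat) : nat :=
  #|[set x in C | hweight x == i]|.

Definition nonzero_weight_distribution (n : nat) (C : {set 'rV['F_2]_n}) : seq nat :=
  [seq a <- [seq weight_count C i | i <- iota 0 n.+1] | a != 0%N].

Definition log_concave_seq (s : seq nat) : Prop :=
  forall i : nat, (0 < i)%N -> (i.+1 < size s)%N ->
    (nth 0 s i.-1 * nth 0 s i.+1 <= nth 0 s i ^ 2)%N.

Definition log_concave_code (n : nat) (C : {set 'rV['F_2]_n}) : Prop :=
  log_concave_seq (nonzero_weight_distribution C).

(* Main.v *)
Require Import Defs.
From mathcomp Require Import all_boot all_algebra.
From mathcomp Require Import zify ring.
From Stdlib Require ZArith Lia.
Module ZL.
Import ZArith Lia.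
Local Open Scope Z_scope.

Lemma lcZ4 (s p3 p4 p5 q1 q2 : Z) (hs : 0 <= s) (hp3 : 6 * p3 = (31 + 2*s)*(30 + 2*s)*(29 + 2*s)) (hp4 : 24 * p4 = (31 + 2*s)*(30 + 2*s)*(29 + 2*s)*(28 + 2*s)) (hp5 : 120 * p5 = (31 + 2*s)*(30 + 2*s)*(29 + 2*s)*(28 + 2*s)*(27 + 2*s)) (hq1 : 1 * q1 = (15 + s)) (hq2 : 2 * q2 = (15 + s)*(14 + s)) :
  (p3 + (31 + 2*s) * q1) * (p5 - (31 + 2*s) * q2) <= (p4 + (31 + 2*s) * q2) * (p4 + (31 + 2*s) * q2).
Proof.
  assert (E3 : 40320 * (p3 + (31 + 2*s) * q1) = (6720 * ((31 + 2*s)*(30 + 2*s)*(29 + 2*s)) + (31 + 2*s) * 40320 * ((15 + s)))).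
  { transitivity (6720 * (6 * p3) + (31 + 2*s) * 40320 * (1 * q1)); [ring|].
    rewrite hp3 hq1. ring. }
  assert (E4 : 40320 * (p4 + (31 + 2*s) * q2) = (1680 * ((31 + 2*s)*(30 + 2*s)*(29 + 2*s)*(28 + 2*s)) + (31 + 2*s) * 20160 * ((15 + s)*(14 + s)))).
  { transitivity (1680 * (24 * p4) + (31 + 2*s) * 20160 * (2 * q2)); [ring|].
    rewrite hp4 hq2. ring. }
  assert (E5 : 40320 * (p5 - (31 + 2*s) * q2) = (336 * ((31 + 2*s)*(30 + 2*s)*(29 + 2*s)*(28 + 2*s)*(27 + 2*s)) - (31 + 2*s) * 20160 * ((15 + s)*(14 + s)))).
  { transitivity (336 * (120 * p5) - (31 + 2*s) * 20160 * (2 * q2)); [ring|].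
    rewrite hp5 hq2. ring. }
  assert (K : 1625702400 * ((p4 + (31 + 2*s) * q2) * (p4 + (31 + 2*s) * q2) - (p3 + (31 + 2*s) * q1) * (p5 - (31 + 2*s) * q2)) = (615921154523136000 + s * (310577446571212800 + s * (68389591487938560 + s * (8588467428065280 + s * (672673059717120 + s * (33642285465600 + s * (1049011568640 + s * (18641387520 + s * 144506880))))))))).
  { transitivity ((40320 * (p4 + (31 + 2*s) * q2)) * (40320 * (p4 + (31 + 2*s) * q2)) - (40320 * (p3 + (31 + 2*s) * q1)) * (40320 * (p5 - (31 + 2*s) * q2))); [ring|].
    rewrite E4 E3 E5. ring. }
  assert (P : 0 <= (615921154523136000 + s * (310577446571212800 + s * (68389591487938560 + s * (8588467428065280 + s * (672673059717120 + s * (33642285465600 + s * (1049011568640 + s * (18641387520 + s * 144506880))))))))) by (repeat (apply Z.add_nonneg_nonneg || apply Z.mul_nonneg_nonneg); lia).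
  apply Z.le_0_sub. apply (Z.mul_nonneg_cancel_l 1625702400); [lia|]. rewrite K. exact P.
Qed.

Lemma lcZ5 (s p4 p5 p6 q2 q3 : Z) (hs : 0 <= s) (hp4 : 24 * p4 = (31 + 2*s)*(30 + 2*s)*(29 + 2*s)*(28 + 2*s)) (hp5 : 120 * p5 = (31 + 2*s)*(30 + 2*s)*(29 + 2*s)*(28 + 2*s)*(27 + 2*s)) (hp6 : 720 * p6 = (31 + 2*s)*(30 + 2*s)*(29 + 2*s)*(28 + 2*s)*(27 + 2*s)*(26 + 2*s)) (hq2 : 2 * q2 = (15 + s)*(14 + s)) (hq3 : 6 * q3 = (15 + s)*(14 + s)*(13 + s)) :
  (p4 + (31 + 2*s) * q2) * (p6 - (31 + 2*s) * q3) <= (p5 - (31 + 2*s) * q2) * (p5 - (31 + 2*s) * q2).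
Proof.
  assert (E4 : 40320 * (p4 + (31 + 2*s) * q2) = (1680 * ((31 + 2*s)*(30 + 2*s)*(29 + 2*s)*(28 + 2*s)) + (31 + 2*s) * 20160 * ((15 + s)*(14 + s)))).
  { transitivity (1680 * (24 * p4) + (31 + 2*s) * 20160 * (2 * q2)); [ring|].
    rewrite hp4 hq2. ring. }
  assert (E5 : 40320 * (p5 - (31 + 2*s) * q2) = (336 * ((31 + 2*s)*(30 + 2*s)*(29 + 2*s)*(28 + 2*s)*(27 + 2*s)) - (31 + 2*s) * 20160 * ((15 + s)*(14 + s)))).
  { transitivity (336 * (120 * p5) - (31 + 2*s) * 20160 * (2 * q2)); [ring|].
    rewrite hp5 hq2. ring. }
  assert (E6 : 40320 * (p6 - (31 + 2*s) * q3) = (56 * ((31 + 2*s)*(30 + 2*s)*(29 + 2*s)*(28 + 2*s)*(27 + 2*s)*(26 + 2*s)) - (31 + 2*s) * 6720 * ((15 + s)*(14 + s)*(13 + s)))).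
  { transitivity (56 * (720 * p6) - (31 + 2*s) * 6720 * (6 * q3)); [ring|].
    rewrite hp6 hq3. ring. }
  assert (K : 1625702400 * ((p5 - (31 + 2*s) * q2) * (p5 - (31 + 2*s) * q2) - (p4 + (31 + 2*s) * q2) * (p6 - (31 + 2*s) * q3)) = (4389838046783078400 + s * (3320531490302853120 + s * (1118482895828680704 + s * (221289393265704960 + s * (28513882631700480 + s * (2502750275665920 + s * (151663568781312 + s * (6269503242240 + s * (169289809920 + s * (2697461760 + s * 19267584))))))))))).
  { transitivity ((40320 * (p5 - (31 + 2*s) * q2)) * (40320 * (p5 - (31 + 2*s) * q2)) - (40320 * (p4 + (31 + 2*s) * q2)) * (40320 * (p6 - (31 + 2*s) * q3))); [ring|].
    rewrite E5 E4 E6. ring. }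
  assert (P : 0 <= (4389838046783078400 + s * (3320531490302853120 + s * (1118482895828680704 + s * (221289393265704960 + s * (28513882631700480 + s * (2502750275665920 + s * (151663568781312 + s * (6269503242240 + s * (169289809920 + s * (2697461760 + s * 19267584))))))))))) by (repeat (apply Z.add_nonneg_nonneg || apply Z.mul_nonneg_nonneg); lia).
  apply Z.le_0_sub. apply (Z.mul_nonneg_cancel_l 1625702400); [lia|]. rewrite K. exact P.
Qed.

Lemma lcZ6 (s p5 p6 p7 q2 q3 : Z) (hs : 0 <= s) (hp5 : 120 * p5 = (31 + 2*s)*(30 + 2*s)*(29 + 2*s)*(28 + 2*s)*(27 + 2*s)) (hp6 : 720 * p6 = (31 + 2*s)*(30 + 2*s)*(29 + 2*s)*(28 + 2*s)*(27 + 2*s)*(26 + 2*s)) (hp7 : 5040 * p7 = (31 + 2*s)*(30 + 2*s)*(29 + 2*s)*(28 + 2*s)*(27 + 2*s)*(26 + 2*s)*(25 + 2*s)) (hq2 : 2 * q2 = (15 + s)*(14 + s)) (hq3 : 6 * q3 = (15 + s)*(14 + s)*(13 + s)) :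
  (p5 - (31 + 2*s) * q2) * (p7 + (31 + 2*s) * q3) <= (p6 - (31 + 2*s) * q3) * (p6 - (31 + 2*s) * q3).
Proof.
  assert (E5 : 40320 * (p5 - (31 + 2*s) * q2) = (336 * ((31 + 2*s)*(30 + 2*s)*(29 + 2*s)*(28 + 2*s)*(27 + 2*s)) - (31 + 2*s) * 20160 * ((15 + s)*(14 + s)))).
  { transitivity (336 * (120 * p5) - (31 + 2*s) * 20160 * (2 * q2)); [ring|].
    rewrite hp5 hq2. ring. }
  assert (E6 : 40320 * (p6 - (31 + 2*s) * q3) = (56 * ((31 + 2*s)*(30 + 2*s)*(29 + 2*s)*(28 + 2*s)*(27 + 2*s)*(26 + 2*s)) - (31 + 2*s) * 6720 * ((15 + s)*(14 + s)*(13 + s)))).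
  { transitivity (56 * (720 * p6) - (31 + 2*s) * 6720 * (6 * q3)); [ring|].
    rewrite hp6 hq3. ring. }
  assert (E7 : 40320 * (p7 + (31 + 2*s) * q3) = (8 * ((31 + 2*s)*(30 + 2*s)*(29 + 2*s)*(28 + 2*s)*(27 + 2*s)*(26 + 2*s)*(25 + 2*s)) + (31 + 2*s) * 6720 * ((15 + s)*(14 + s)*(13 + s)))).
  { transitivity (8 * (5040 * p7) + (31 + 2*s) * 6720 * (6 * q3)); [ring|].
    rewrite hp7 hq3. ring. }
  assert (K : 1625702400 * ((p6 - (31 + 2*s) * q3) * (p6 - (31 + 2*s) * q3) - (p5 - (31 + 2*s) * q2) * (p7 + (31 + 2*s) * q3)) = (131605552871925350400 + s * (112611039886882897920 + s * (43995211593753821184 + s * (10379642318372339712 + s * (1647351259354759168 + s * (185321447795097600 + s * (15154984016248832 + s * (907845933367296 + s * (39542644506624 + s * (1221434081280 + s * (25399721984 + s * (319291392 + s * 1835008))))))))))))).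
  { transitivity ((40320 * (p6 - (31 + 2*s) * q3)) * (40320 * (p6 - (31 + 2*s) * q3)) - (40320 * (p5 - (31 + 2*s) * q2)) * (40320 * (p7 + (31 + 2*s) * q3))); [ring|].
    rewrite E6 E5 E7. ring. }
  assert (P : 0 <= (131605552871925350400 + s * (112611039886882897920 + s * (43995211593753821184 + s * (10379642318372339712 + s * (1647351259354759168 + s * (185321447795097600 + s * (15154984016248832 + s * (907845933367296 + s * (39542644506624 + s * (1221434081280 + s * (25399721984 + s * (319291392 + s * 1835008))))))))))))) by (repeat (apply Z.add_nonneg_nonneg || apply Z.mul_nonneg_nonneg); lia).
  apply Z.le_0_sub. apply (Z.mul_nonneg_cancel_l 1625702400); [lia|]. rewrite K. exact P.
Qed.

Lemma lcZ7 (s p6 p7 p8 q3 q4 : Z) (hs : 0 <= s) (hp6 : 720 * p6 = (31 + 2*s)*(30 + 2*s)*(29 + 2*s)*(28 + 2*s)*(27 + 2*s)*(26 + 2*s)) (hp7 : 5040 * p7 = (31 + 2*s)*(30 + 2*s)*(29 + 2*s)*(28 + 2*s)*(27 + 2*s)*(26 + 2*s)*(25 + 2*s)) (hp8 : 40320 * p8 = (31 + 2*s)*(30 + 2*s)*(29 + 2*s)*(28 + 2*s)*(27 + 2*s)*(26 + 2*s)*(25 + 2*s)*(24 + 2*s)) (hq3 : 6 * q3 = (15 + s)*(14 + s)*(13 + s)) (hq4 : 24 * q4 = (15 + s)*(14 + s)*(13 + s)*(12 + s)) :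
  (p6 - (31 + 2*s) * q3) * (p8 + (31 + 2*s) * q4) <= (p7 + (31 + 2*s) * q3) * (p7 + (31 + 2*s) * q3).
Proof.
  assert (E6 : 40320 * (p6 - (31 + 2*s) * q3) = (56 * ((31 + 2*s)*(30 + 2*s)*(29 + 2*s)*(28 + 2*s)*(27 + 2*s)*(26 + 2*s)) - (31 + 2*s) * 6720 * ((15 + s)*(14 + s)*(13 + s)))).
  { transitivity (56 * (720 * p6) - (31 + 2*s) * 6720 * (6 * q3)); [ring|].
    rewrite hp6 hq3. ring. }
  assert (E7 : 40320 * (p7 + (31 + 2*s) * q3) = (8 * ((31 + 2*s)*(30 + 2*s)*(29 + 2*s)*(28 + 2*s)*(27 + 2*s)*(26 + 2*s)*(25 + 2*s)) + (31 + 2*s) * 6720 * ((15 + s)*(14 + s)*(13 + s)))).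
  { transitivity (8 * (5040 * p7) + (31 + 2*s) * 6720 * (6 * q3)); [ring|].
    rewrite hp7 hq3. ring. }
  assert (E8 : 40320 * (p8 + (31 + 2*s) * q4) = (1 * ((31 + 2*s)*(30 + 2*s)*(29 + 2*s)*(28 + 2*s)*(27 + 2*s)*(26 + 2*s)*(25 + 2*s)*(24 + 2*s)) + (31 + 2*s) * 1680 * ((15 + s)*(14 + s)*(13 + s)*(12 + s)))).
  { transitivity (1 * (40320 * p8) + (31 + 2*s) * 1680 * (24 * q4)); [ring|].
    rewrite hp8 hq4. ring. }
  assert (K : 1625702400 * ((p7 + (31 + 2*s) * q3) * (p7 + (31 + 2*s) * q3) - (p6 - (31 + 2*s) * q3) * (p8 + (31 + 2*s) * q4)) = (2050721482448830464000 + s * (1988265955250405376000 + s * (895826243029506785280 + s * (248615833430985474048 + s * (47481863967329075200 + s * (6601711108709842944 + s * (689110546437332992 + s * (54862117548048384 + s * (3347566725038080 + s * (155792876961792 + s * (5443645792256 + s * (138481287168 + s * (2424504320 + s * (26148864 + s * 131072))))))))))))))).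
  { transitivity ((40320 * (p7 + (31 + 2*s) * q3)) * (40320 * (p7 + (31 + 2*s) * q3)) - (40320 * (p6 - (31 + 2*s) * q3)) * (40320 * (p8 + (31 + 2*s) * q4))); [ring|].
    rewrite E7 E6 E8. ring. }
  assert (P : 0 <= (2050721482448830464000 + s * (1988265955250405376000 + s * (895826243029506785280 + s * (248615833430985474048 + s * (47481863967329075200 + s * (6601711108709842944 + s * (689110546437332992 + s * (54862117548048384 + s * (3347566725038080 + s * (155792876961792 + s * (5443645792256 + s * (138481287168 + s * (2424504320 + s * (26148864 + s * 131072))))))))))))))) by (repeat (apply Z.add_nonneg_nonneg || apply Z.mul_nonneg_nonneg); lia).
  apply Z.le_0_sub. apply (Z.mul_nonneg_cancel_l 1625702400); [lia|]. rewrite K. exact P.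
Qed.

Lemma posZ3 (s p3 q1 : Z) (hs : 0 <= s) (hp3 : 6 * p3 = (31 + 2*s)*(30 + 2*s)*(29 + 2*s)) (hq1 : 1 * q1 = (15 + s)) :
  0 < (p3 + (31 + 2*s) * q1).
Proof.
  assert (E3 : 40320 * (p3 + (31 + 2*s) * q1) = (6720 * ((31 + 2*s)*(30 + 2*s)*(29 + 2*s)) + (31 + 2*s) * 40320 * ((15 + s)))).
  { transitivity (6720 * (6 * p3) + (31 + 2*s) * 40320 * (1 * q1)); [ring|].
    rewrite hp3 hq1. ring. }
  assert (P : 0 < (199987200 + s * (38734080 + s * (2499840 + s * 53760)))) by (repeat (apply Z.add_pos_nonneg || apply Z.mul_nonneg_nonneg); lia).
  assert (K : 40320 * (p3 + (31 + 2*s) * q1) = (199987200 + s * (38734080 + s * (2499840 + s * 53760)))) by (rewrite E3; ring).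
  apply (Z.mul_pos_cancel_l 40320); [lia|]. rewrite K. exact P.
Qed.

Lemma posZ4 (s p4 q2 : Z) (hs : 0 <= s) (hp4 : 24 * p4 = (31 + 2*s)*(30 + 2*s)*(29 + 2*s)*(28 + 2*s)) (hq2 : 2 * q2 = (15 + s)*(14 + s)) :
  0 < (p4 + (31 + 2*s) * q2).
Proof.
  assert (E4 : 40320 * (p4 + (31 + 2*s) * q2) = (1680 * ((31 + 2*s)*(30 + 2*s)*(29 + 2*s)*(28 + 2*s)) + (31 + 2*s) * 20160 * ((15 + s)*(14 + s)))).
  { transitivity (1680 * (24 * p4) + (31 + 2*s) * 20160 * (2 * q2)); [ring|].
    rewrite hp4 hq2. ring. }
  assert (P : 0 < (1399910400 + s * (371132160 + s * (36865920 + s * (1626240 + s * 26880))))) by (repeat (apply Z.add_pos_nonneg || apply Z.mul_nonneg_nonneg); lia).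
  assert (K : 40320 * (p4 + (31 + 2*s) * q2) = (1399910400 + s * (371132160 + s * (36865920 + s * (1626240 + s * 26880))))) by (rewrite E4; ring).
  apply (Z.mul_pos_cancel_l 40320); [lia|]. rewrite K. exact P.
Qed.

Lemma posZ5 (s p5 q2 : Z) (hs : 0 <= s) (hp5 : 120 * p5 = (31 + 2*s)*(30 + 2*s)*(29 + 2*s)*(28 + 2*s)*(27 + 2*s)) (hq2 : 2 * q2 = (15 + s)*(14 + s)) :
  0 < (p5 - (31 + 2*s) * q2).
Proof.
  assert (E5 : 40320 * (p5 - (31 + 2*s) * q2) = (336 * ((31 + 2*s)*(30 + 2*s)*(29 + 2*s)*(28 + 2*s)*(27 + 2*s)) - (31 + 2*s) * 20160 * ((15 + s)*(14 + s)))).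
  { transitivity (336 * (120 * p5) - (31 + 2*s) * 20160 * (2 * q2)); [ring|].
    rewrite hp5 hq2. ring. }
  assert (P : 0 < (6719569920 + s * (2341398528 + s * (325409280 + s * (22552320 + s * (779520 + s * 10752)))))) by (repeat (apply Z.add_pos_nonneg || apply Z.mul_nonneg_nonneg); lia).
  assert (K : 40320 * (p5 - (31 + 2*s) * q2) = (6719569920 + s * (2341398528 + s * (325409280 + s * (22552320 + s * (779520 + s * 10752)))))) by (rewrite E5; ring).
  apply (Z.mul_pos_cancel_l 40320); [lia|]. rewrite K. exact P.
Qed.

Lemma posZ6 (s p6 q3 : Z) (hs : 0 <= s) (hp6 : 720 * p6 = (31 + 2*s)*(30 + 2*s)*(29 + 2*s)*(28 + 2*s)*(27 + 2*s)*(26 + 2*s)) (hq3 : 6 * q3 = (15 + s)*(14 + s)*(13 + s)) :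
  0 < (p6 - (31 + 2*s) * q3).
Proof.
  assert (E6 : 40320 * (p6 - (31 + 2*s) * q3) = (56 * ((31 + 2*s)*(30 + 2*s)*(29 + 2*s)*(28 + 2*s)*(27 + 2*s)*(26 + 2*s)) - (31 + 2*s) * 6720 * ((15 + s)*(14 + s)*(13 + s)))).
  { transitivity (56 * (720 * p6) - (31 + 2*s) * 6720 * (6 * q3)); [ring|].
    rewrite hp6 hq3. ring. }
  assert (P : 0 < (29118136320 + s * (12385916928 + s * (2190573056 + s * (206196480 + s * (10895360 + s * (306432 + s * 3584))))))) by (repeat (apply Z.add_pos_nonneg || apply Z.mul_nonneg_nonneg); lia).
  assert (K : 40320 * (p6 - (31 + 2*s) * q3) = (29118136320 + s * (12385916928 + s * (2190573056 + s * (206196480 + s * (10895360 + s * (306432 + s * 3584))))))) by (rewrite E6; ring).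
  apply (Z.mul_pos_cancel_l 40320); [lia|]. rewrite K. exact P.
Qed.

Lemma endZ (s p3 p4 q1 q2 : Z) (hs : 0 <= s) (hp3 : 6 * p3 = (31 + 2*s)*(30 + 2*s)*(29 + 2*s)) (hp4 : 24 * p4 = (31 + 2*s)*(30 + 2*s)*(29 + 2*s)*(28 + 2*s)) (hq1 : 1 * q1 = (15 + s)) (hq2 : 2 * q2 = (15 + s)*(14 + s)) :
  ((31 + 2*s) + 1) * (p4 + (31 + 2*s) * q2) <= (p3 + (31 + 2*s) * q1) * (p3 + (31 + 2*s) * q1).
Proof.
  assert (E3 : 40320 * (p3 + (31 + 2*s) * q1) = (6720 * ((31 + 2*s)*(30 + 2*s)*(29 + 2*s)) + (31 + 2*s) * 40320 * ((15 + s)))).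
  { transitivity (6720 * (6 * p3) + (31 + 2*s) * 40320 * (1 * q1)); [ring|].
    rewrite hp3 hq1. ring. }
  assert (E4 : 40320 * (p4 + (31 + 2*s) * q2) = (1680 * ((31 + 2*s)*(30 + 2*s)*(29 + 2*s)*(28 + 2*s)) + (31 + 2*s) * 20160 * ((15 + s)*(14 + s)))).
  { transitivity (1680 * (24 * p4) + (31 + 2*s) * 20160 * (2 * q2)); [ring|].
    rewrite hp4 hq2. ring. }
  assert (K : 1625702400 * ((p3 + (31 + 2*s) * q1) * (p3 + (31 + 2*s) * q1) - ((31 + 2*s) + 1) * (p4 + (31 + 2*s) * q2)) = (38188659769344000 + s * (14900902074777600 + s * (2422706975539200 + s * (210089521152000 + s * (10248066662400 + s * (266615193600 + s * 2890137600))))))).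
  { transitivity ((40320 * (p3 + (31 + 2*s) * q1)) * (40320 * (p3 + (31 + 2*s) * q1)) - 40320 * ((31 + 2*s) + 1) * (40320 * (p4 + (31 + 2*s) * q2))); [ring|].
    rewrite E3 E4. ring. }
  assert (P : 0 <= (38188659769344000 + s * (14900902074777600 + s * (2422706975539200 + s * (210089521152000 + s * (10248066662400 + s * (266615193600 + s * 2890137600))))))) by (repeat (apply Z.add_nonneg_nonneg || apply Z.mul_nonneg_nonneg); lia).
  apply Z.le_0_sub. apply (Z.mul_nonneg_cancel_l 1625702400); [lia|]. rewrite K. exact P.
Qed.

Lemma crudeZ7 (s p7 q3 : Z) (hs : 0 <= s) (hp7 : 5040 * p7 = (31 + 2*s)*(30 + 2*s)*(29 + 2*s)*(28 + 2*s)*(27 + 2*s)*(26 + 2*s)*(25 + 2*s)) (hq3 : 6 * q3 = (15 + s)*(14 + s)*(13 + s)) :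
  (4 * (15 + s) + 6) * (31 + 2*s) * q3 <= p7.
Proof.
  assert (K : 40320 * (p7 - (4 * (15 + s) + 6) * (31 + 2*s) * q3) = (68489366400 + s * (40517935680 + s * (9733098368 + s * (1252248256 + s * (94115840 + s * (4157440 + s * (100352 + s * 1024)))))))).
  { transitivity (8 * (5040 * p7) - (4 * (15 + s) + 6) * (31 + 2*s) * 6720 * (6 * q3)); [ring|].
    rewrite hp7 hq3. ring. }
  assert (P : 0 <= (68489366400 + s * (40517935680 + s * (9733098368 + s * (1252248256 + s * (94115840 + s * (4157440 + s * (100352 + s * 1024)))))))) by (repeat (apply Z.add_nonneg_nonneg || apply Z.mul_nonneg_nonneg); lia).
  apply Z.le_0_sub. apply (Z.mul_nonneg_cancel_l 40320); [lia|]. rewrite K. exact P.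
Qed.

Lemma crudeZ8 (s p8 q4 : Z) (hs : 0 <= s) (hp8 : 40320 * p8 = (31 + 2*s)*(30 + 2*s)*(29 + 2*s)*(28 + 2*s)*(27 + 2*s)*(26 + 2*s)*(25 + 2*s)*(24 + 2*s)) (hq4 : 24 * q4 = (15 + s)*(14 + s)*(13 + s)*(12 + s)) :
  (4 * (15 + s) + 6) * (31 + 2*s) * q4 <= p8.
Proof.
  assert (K : 40320 * (p8 - (4 * (15 + s) + 6) * (31 + 2*s) * q4) = (205468099200 + s * (138676148640 + s * (39328779024 + s * (6190019360 + s * (595409584 + s * (36001280 + s * (1340416 + s * (28160 + s * 256))))))))).
  { transitivity (1 * (40320 * p8) - (4 * (15 + s) + 6) * (31 + 2*s) * 1680 * (24 * q4)); [ring|].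
    rewrite hp8 hq4. ring. }
  assert (P : 0 <= (205468099200 + s * (138676148640 + s * (39328779024 + s * (6190019360 + s * (595409584 + s * (36001280 + s * (1340416 + s * (28160 + s * 256))))))))) by (repeat (apply Z.add_nonneg_nonneg || apply Z.mul_nonneg_nonneg); lia).
  apply Z.le_0_sub. apply (Z.mul_nonneg_cancel_l 40320); [lia|]. rewrite K. exact P.
Qed.

End ZL.
Set Implicit Arguments. Unset Strict Implicit. Unset Printing Implicit Defensive.
Import GRing.Theory Num.Theory.
Local Open Scope ring_scope.

Definition sgn (i : nat) : int := (-1) ^+ (i./2 + odd i).
Definition FF (k i : nat) : int :=
  ('C(k.*2.+1, i))%:Z + sgn i * ((k.*2.+1) * 'C(k, i./2))%:Z.

Lemma sgnE i : sgn i = if odd (i./2 + odd i) then -1 else 1.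
Proof. by rewrite /sgn -signr_odd; case: (odd _); rewrite ?expr1 ?expr0. Qed.

Lemma binN3 s : ('C(31 + 2*s, 3) * 6 = (31 + 2*s) * (30 + 2*s) * (29 + 2*s))%nat.
Proof. rewrite bin_ffact !ffactnS ffactn0 /=. lia. Qed.

Lemma binN4 s : ('C(31 + 2*s, 4) * 24 = (31 + 2*s) * (30 + 2*s) * (29 + 2*s) * (28 + 2*s))%nat.
Proof. rewrite bin_ffact !ffactnS ffactn0 /=. lia. Qed.

Lemma binN5 s : ('C(31 + 2*s, 5) * 120 = (31 + 2*s) * (30 + 2*s) * (29 + 2*s) * (28 + 2*s) * (27 + 2*s))%nat.
Proof. rewrite bin_ffact !ffactnS ffactn0 /=. lia. Qed.

Lemma binN6 s : ('C(31 + 2*s, 6) * 720 = (31 + 2*s) * (30 + 2*s) * (29 + 2*s) * (28 + 2*s) * (27 + 2*s) * (26 + 2*s))%nat.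
Proof. rewrite bin_ffact !ffactnS ffactn0 /=. lia. Qed.

Lemma binN7 s : ('C(31 + 2*s, 7) * 5040 = (31 + 2*s) * (30 + 2*s) * (29 + 2*s) * (28 + 2*s) * (27 + 2*s) * (26 + 2*s) * (25 + 2*s))%nat.
Proof. rewrite bin_ffact !ffactnS ffactn0 /=. lia. Qed.

Lemma binN8 s : ('C(31 + 2*s, 8) * 40320 = (31 + 2*s) * (30 + 2*s) * (29 + 2*s) * (28 + 2*s) * (27 + 2*s) * (26 + 2*s) * (25 + 2*s) * (24 + 2*s))%nat.
Proof. rewrite bin_ffact !ffactnS ffactn0 /=. lia. Qed.

Lemma binK1 s : ('C(15 + s, 1) * 1 = (15 + s))%nat.
Proof. rewrite bin_ffact !ffactnS ffactn0 /=. lia. Qed.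

Lemma binK2 s : ('C(15 + s, 2) * 2 = (15 + s) * (14 + s))%nat.
Proof. rewrite bin_ffact !ffactnS ffactn0 /=. lia. Qed.

Lemma binK3 s : ('C(15 + s, 3) * 6 = (15 + s) * (14 + s) * (13 + s))%nat.
Proof. rewrite bin_ffact !ffactnS ffactn0 /=. lia. Qed.

Lemma binK4 s : ('C(15 + s, 4) * 24 = (15 + s) * (14 + s) * (13 + s) * (12 + s))%nat.
Proof. rewrite bin_ffact !ffactnS ffactn0 /=. lia. Qed.

Module ZB.
Import ZArith.
Local Open Scope Z_scope.
Lemma binNZ3 s : 6 * Z.of_nat 'C(31 + 2*s, 3) = (31 + 2*Z.of_nat s)*(30 + 2*Z.of_nat s)*(29 + 2*Z.of_nat s).
Proof. have e : forall u, Z.of_nat (u + 2*s)%nat = Z.of_nat u + 2 * Z.of_nat s by move=> u; lia.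
 transitivity (Z.of_nat ('C(31+2*s,3) * 6)%nat); first by rewrite Nat2Z.inj_mul Z.mul_comm.
 rewrite binN3 !Nat2Z.inj_mul !e. reflexivity. Qed.
Lemma binNZ4 s : 24 * Z.of_nat 'C(31 + 2*s, 4) = (31 + 2*Z.of_nat s)*(30 + 2*Z.of_nat s)*(29 + 2*Z.of_nat s)*(28 + 2*Z.of_nat s).
Proof. have e : forall u, Z.of_nat (u + 2*s)%nat = Z.of_nat u + 2 * Z.of_nat s by move=> u; lia.
 transitivity (Z.of_nat ('C(31+2*s,4) * 24)%nat); first by rewrite Nat2Z.inj_mul Z.mul_comm.
 rewrite binN4 !Nat2Z.inj_mul !e. reflexivity. Qed.
Lemma binNZ5 s : 120 * Z.of_nat 'C(31 + 2*s, 5) = (31 + 2*Z.of_nat s)*(30 + 2*Z.of_nat s)*(29 + 2*Z.of_nat s)*(28 + 2*Z.of_nat s)*(27 + 2*Z.of_nat s).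
Proof. have e : forall u, Z.of_nat (u + 2*s)%nat = Z.of_nat u + 2 * Z.of_nat s by move=> u; lia.
 transitivity (Z.of_nat ('C(31+2*s,5) * 120)%nat); first by rewrite Nat2Z.inj_mul Z.mul_comm.
 rewrite binN5 !Nat2Z.inj_mul !e. reflexivity. Qed.
Lemma binNZ6 s : 720 * Z.of_nat 'C(31 + 2*s, 6) = (31 + 2*Z.of_nat s)*(30 + 2*Z.of_nat s)*(29 + 2*Z.of_nat s)*(28 + 2*Z.of_nat s)*(27 + 2*Z.of_nat s)*(26 + 2*Z.of_nat s).
Proof. have e : forall u, Z.of_nat (u + 2*s)%nat = Z.of_nat u + 2 * Z.of_nat s by move=> u; lia.
 transitivity (Z.of_nat ('C(31+2*s,6) * 720)%nat); first by rewrite Nat2Z.inj_mul Z.mul_comm.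
 rewrite binN6 !Nat2Z.inj_mul !e. reflexivity. Qed.
Lemma binNZ7 s : 5040 * Z.of_nat 'C(31 + 2*s, 7) = (31 + 2*Z.of_nat s)*(30 + 2*Z.of_nat s)*(29 + 2*Z.of_nat s)*(28 + 2*Z.of_nat s)*(27 + 2*Z.of_nat s)*(26 + 2*Z.of_nat s)*(25 + 2*Z.of_nat s).
Proof. have e : forall u, Z.of_nat (u + 2*s)%nat = Z.of_nat u + 2 * Z.of_nat s by move=> u; lia.
 transitivity (Z.of_nat ('C(31+2*s,7) * 5040)%nat); first by rewrite Nat2Z.inj_mul Z.mul_comm.
 rewrite binN7 !Nat2Z.inj_mul !e. reflexivity. Qed.
Lemma binNZ8 s : 40320 * Z.of_nat 'C(31 + 2*s, 8) = (31 + 2*Z.of_nat s)*(30 + 2*Z.of_nat s)*(29 + 2*Z.of_nat s)*(28 + 2*Z.of_nat s)*(27 + 2*Z.of_nat s)*(26 + 2*Z.of_nat s)*(25 + 2*Z.of_nat s)*(24 + 2*Z.of_nat s).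
Proof. have e : forall u, Z.of_nat (u + 2*s)%nat = Z.of_nat u + 2 * Z.of_nat s by move=> u; lia.
 transitivity (Z.of_nat ('C(31+2*s,8) * 40320)%nat); first by rewrite Nat2Z.inj_mul Z.mul_comm.
 rewrite binN8 !Nat2Z.inj_mul !e. reflexivity. Qed.
Lemma binKZ1 s : 1 * Z.of_nat 'C(15 + s, 1) = (15 + Z.of_nat s).
Proof. have e : forall u, Z.of_nat (u + s)%nat = Z.of_nat u + Z.of_nat s by move=> u; lia.
 transitivity (Z.of_nat ('C(15+s,1) * 1)%nat); first by rewrite Nat2Z.inj_mul Z.mul_comm.
 rewrite binK1 ?Nat2Z.inj_mul !e. reflexivity. Qed.
Lemma binKZ2 s : 2 * Z.of_nat 'C(15 + s, 2) = (15 + Z.of_nat s)*(14 + Z.of_nat s).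
Proof. have e : forall u, Z.of_nat (u + s)%nat = Z.of_nat u + Z.of_nat s by move=> u; lia.
 transitivity (Z.of_nat ('C(15+s,2) * 2)%nat); first by rewrite Nat2Z.inj_mul Z.mul_comm.
 rewrite binK2 ?Nat2Z.inj_mul !e. reflexivity. Qed.
Lemma binKZ3 s : 6 * Z.of_nat 'C(15 + s, 3) = (15 + Z.of_nat s)*(14 + Z.of_nat s)*(13 + Z.of_nat s).
Proof. have e : forall u, Z.of_nat (u + s)%nat = Z.of_nat u + Z.of_nat s by move=> u; lia.
 transitivity (Z.of_nat ('C(15+s,3) * 6)%nat); first by rewrite Nat2Z.inj_mul Z.mul_comm.
 rewrite binK3 ?Nat2Z.inj_mul !e. reflexivity. Qed.
Lemma binKZ4 s : 24 * Z.of_nat 'C(15 + s, 4) = (15 + Z.of_nat s)*(14 + Z.of_nat s)*(13 + Z.of_nat s)*(12 + Z.of_nat s).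
Proof. have e : forall u, Z.of_nat (u + s)%nat = Z.of_nat u + Z.of_nat s by move=> u; lia.
 transitivity (Z.of_nat ('C(15+s,4) * 24)%nat); first by rewrite Nat2Z.inj_mul Z.mul_comm.
 rewrite binK4 ?Nat2Z.inj_mul !e. reflexivity. Qed.
End ZB.

Lemma lcS4 k : (15 <= k)%nat -> FF k 3 * FF k 5 <= FF k 4 ^+ 2.
Proof.
  move=> hk; have [s ->] : exists s, k = (15 + s)%nat by exists (k - 15)%nat; lia.
  rewrite /FF !sgnE /=.
  have -> : (15 + s).*2.+1 = (31 + 2*s)%nat by lia.
  have := ZL.lcZ4 (BinInt.Z.of_nat s) (BinInt.Z.of_nat 'C(31 + 2*s, 3)) (BinInt.Z.of_nat 'C(31 + 2*s, 4)) (BinInt.Z.of_nat 'C(31 + 2*s, 5)) (BinInt.Z.of_nat 'C(15 + s, 1)) (BinInt.Z.of_nat 'C(15 + s, 2)) (ltac:(lia)) (ZB.binNZ3 s) (ZB.binNZ4 s) (ZB.binNZ5 s) (ZB.binKZ1 s) (ZB.binKZ2 s).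
  rewrite expr2. lia.
Qed.

Lemma lcS5 k : (15 <= k)%nat -> FF k 4 * FF k 6 <= FF k 5 ^+ 2.
Proof.
  move=> hk; have [s ->] : exists s, k = (15 + s)%nat by exists (k - 15)%nat; lia.
  rewrite /FF !sgnE /=.
  have -> : (15 + s).*2.+1 = (31 + 2*s)%nat by lia.
  have := ZL.lcZ5 (BinInt.Z.of_nat s) (BinInt.Z.of_nat 'C(31 + 2*s, 4)) (BinInt.Z.of_nat 'C(31 + 2*s, 5)) (BinInt.Z.of_nat 'C(31 + 2*s, 6)) (BinInt.Z.of_nat 'C(15 + s, 2)) (BinInt.Z.of_nat 'C(15 + s, 3)) (ltac:(lia)) (ZB.binNZ4 s) (ZB.binNZ5 s) (ZB.binNZ6 s) (ZB.binKZ2 s) (ZB.binKZ3 s).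
  rewrite expr2. lia.
Qed.

Lemma lcS6 k : (15 <= k)%nat -> FF k 5 * FF k 7 <= FF k 6 ^+ 2.
Proof.
  move=> hk; have [s ->] : exists s, k = (15 + s)%nat by exists (k - 15)%nat; lia.
  rewrite /FF !sgnE /=.
  have -> : (15 + s).*2.+1 = (31 + 2*s)%nat by lia.
  have := ZL.lcZ6 (BinInt.Z.of_nat s) (BinInt.Z.of_nat 'C(31 + 2*s, 5)) (BinInt.Z.of_nat 'C(31 + 2*s, 6)) (BinInt.Z.of_nat 'C(31 + 2*s, 7)) (BinInt.Z.of_nat 'C(15 + s, 2)) (BinInt.Z.of_nat 'C(15 + s, 3)) (ltac:(lia)) (ZB.binNZ5 s) (ZB.binNZ6 s) (ZB.binNZ7 s) (ZB.binKZ2 s) (ZB.binKZ3 s).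
  rewrite expr2. lia.
Qed.

Lemma lcS7 k : (15 <= k)%nat -> FF k 6 * FF k 8 <= FF k 7 ^+ 2.
Proof.
  move=> hk; have [s ->] : exists s, k = (15 + s)%nat by exists (k - 15)%nat; lia.
  rewrite /FF !sgnE /=.
  have -> : (15 + s).*2.+1 = (31 + 2*s)%nat by lia.
  have := ZL.lcZ7 (BinInt.Z.of_nat s) (BinInt.Z.of_nat 'C(31 + 2*s, 6)) (BinInt.Z.of_nat 'C(31 + 2*s, 7)) (BinInt.Z.of_nat 'C(31 + 2*s, 8)) (BinInt.Z.of_nat 'C(15 + s, 3)) (BinInt.Z.of_nat 'C(15 + s, 4)) (ltac:(lia)) (ZB.binNZ6 s) (ZB.binNZ7 s) (ZB.binNZ8 s) (ZB.binKZ3 s) (ZB.binKZ4 s).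
  rewrite expr2. lia.
Qed.

Lemma posS3 k : (15 <= k)%nat -> 0 < FF k 3.
Proof.
  move=> hk; have [s ->] : exists s, k = (15 + s)%nat by exists (k - 15)%nat; lia.
  rewrite /FF !sgnE /=.
  have -> : (15 + s).*2.+1 = (31 + 2*s)%nat by lia.
  have := ZL.posZ3 (BinInt.Z.of_nat s) (BinInt.Z.of_nat 'C(31 + 2*s, 3)) (BinInt.Z.of_nat 'C(15 + s, 1)) (ltac:(lia)) (ZB.binNZ3 s) (ZB.binKZ1 s).
  lia.
Qed.

Lemma posS4 k : (15 <= k)%nat -> 0 < FF k 4.
Proof.
  move=> hk; have [s ->] : exists s, k = (15 + s)%nat by exists (k - 15)%nat; lia.
  rewrite /FF !sgnE /=.
  have -> : (15 + s).*2.+1 = (31 + 2*s)%nat by lia.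
  have := ZL.posZ4 (BinInt.Z.of_nat s) (BinInt.Z.of_nat 'C(31 + 2*s, 4)) (BinInt.Z.of_nat 'C(15 + s, 2)) (ltac:(lia)) (ZB.binNZ4 s) (ZB.binKZ2 s).
  lia.
Qed.

Lemma posS5 k : (15 <= k)%nat -> 0 < FF k 5.
Proof.
  move=> hk; have [s ->] : exists s, k = (15 + s)%nat by exists (k - 15)%nat; lia.
  rewrite /FF !sgnE /=.
  have -> : (15 + s).*2.+1 = (31 + 2*s)%nat by lia.
  have := ZL.posZ5 (BinInt.Z.of_nat s) (BinInt.Z.of_nat 'C(31 + 2*s, 5)) (BinInt.Z.of_nat 'C(15 + s, 2)) (ltac:(lia)) (ZB.binNZ5 s) (ZB.binKZ2 s).
  lia.
Qed.

Lemma posS6 k : (15 <= k)%nat -> 0 < FF k 6.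
Proof.
  move=> hk; have [s ->] : exists s, k = (15 + s)%nat by exists (k - 15)%nat; lia.
  rewrite /FF !sgnE /=.
  have -> : (15 + s).*2.+1 = (31 + 2*s)%nat by lia.
  have := ZL.posZ6 (BinInt.Z.of_nat s) (BinInt.Z.of_nat 'C(31 + 2*s, 6)) (BinInt.Z.of_nat 'C(15 + s, 3)) (ltac:(lia)) (ZB.binNZ6 s) (ZB.binKZ3 s).
  lia.
Qed.

Lemma endS k : (15 <= k)%nat -> (k.*2.+2)%:Z * FF k 4 <= FF k 3 ^+ 2.
Proof.
  move=> hk; have [s ->] : exists s, k = (15 + s)%nat by exists (k - 15)%nat; lia.
  rewrite /FF !sgnE /=.
  have -> : (15 + s).*2.+1 = (31 + 2*s)%nat by lia.
  have -> : (31 + 2*s).+1 = (32 + 2*s)%nat by lia.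
  have := ZL.endZ (BinInt.Z.of_nat s) (BinInt.Z.of_nat 'C(31 + 2*s, 3)) (BinInt.Z.of_nat 'C(31 + 2*s, 4)) (BinInt.Z.of_nat 'C(15 + s, 1)) (BinInt.Z.of_nat 'C(15 + s, 2)) (ltac:(lia)) (ZB.binNZ3 s) (ZB.binNZ4 s) (ZB.binKZ1 s) (ZB.binKZ2 s).
  rewrite expr2. lia.
Qed.

Lemma crudeS7 k : (15 <= k)%nat -> ((4 * k + 6) * (k.*2.+1 * 'C(k, 3)) <= 'C(k.*2.+1, 7))%nat.
Proof.
  move=> hk; have [s ->] : exists s, k = (15 + s)%nat by exists (k - 15)%nat; lia.
  have -> : (15 + s).*2.+1 = (31 + 2*s)%nat by lia.
  have := ZL.crudeZ7 (BinInt.Z.of_nat s) (BinInt.Z.of_nat 'C(31 + 2*s, 7)) (BinInt.Z.of_nat 'C(15 + s, 3)) (ltac:(lia)) (ZB.binNZ7 s) (ZB.binKZ3 s).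
  lia.
Qed.

Lemma crudeS8 k : (15 <= k)%nat -> ((4 * k + 6) * (k.*2.+1 * 'C(k, 4)) <= 'C(k.*2.+1, 8))%nat.
Proof.
  move=> hk; have [s ->] : exists s, k = (15 + s)%nat by exists (k - 15)%nat; lia.
  have -> : (15 + s).*2.+1 = (31 + 2*s)%nat by lia.
  have := ZL.crudeZ8 (BinInt.Z.of_nat s) (BinInt.Z.of_nat 'C(31 + 2*s, 8)) (BinInt.Z.of_nat 'C(15 + s, 4)) (ltac:(lia)) (ZB.binNZ8 s) (ZB.binKZ4 s).
  lia.
Qed.


Local Close Scope ring_scope.

Lemma crude_step k t : (t.+2 <= k.+1)%N ->
  ((4*k+6) * (k.*2.+1 * 'C(k, t./2)) <= 'C(k.*2.+1, t))%N ->
  ((4*k+6) * (k.*2.+1 * 'C(k, t.+2./2)) <= 'C(k.*2.+1, t.+2))%N.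
Proof.
move=> ht H.
set n := k.*2.+1; set L := 4*k+6; set j := t./2.
have e1 := mul_bin_left n t.
have e2 := mul_bin_left n t.+1.
have e3 := mul_bin_left k j.
have tj : t = (j.*2 + odd t)%N by rewrite /j -{1}(odd_double_half t) addnC.
rewrite [t.+2./2]/= -/j.
have pos : (0 < j.+1 * t.+1 * t.+2)%N by [].
rewrite -(leq_pmul2l pos).
have -> : (j.+1 * t.+1 * t.+2 * (L * (n * 'C(k, j.+1))) = t.+1 * t.+2 * L * n * (j.+1 * 'C(k, j.+1)))%N by ring.
have -> : (j.+1 * t.+1 * t.+2 * 'C(n, t.+2) = j.+1 * t.+1 * (t.+2 * 'C(n, t.+2)))%N by ring.
rewrite e3 e2.
have -> : (j.+1 * t.+1 * ((n - t.+1) * 'C(n, t.+1)) = j.+1 * (n - t.+1) * (t.+1 * 'C(n, t.+1)))%N by ring.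
rewrite e1.
have -> : (t.+1 * t.+2 * L * n * ((k - j) * 'C(k, j)) = t.+1 * t.+2 * (k - j) * (L * (n * 'C(k, j))))%N by ring.
have -> : (j.+1 * (n - t.+1) * ((n - t) * 'C(n, t)) = j.+1 * (n - t.+1) * (n - t) * 'C(n, t))%N by ring.
apply: leq_trans (leq_mul (leqnn _) H) _.
apply: leq_mul (leqnn _).
have hjk : (j <= k)%N by lia.
move: ht tj; rewrite /n; case: (odd t) => ht tj /=.
- have E1 : (t.+1 * t.+2 * (k - j) = (2 * j.+1 * (k - j)) * (2 * j + 3))%N.
    by rewrite tj -mul2n /=; ring.
  have E2 : (j.+1 * (k.*2.+1 - t.+1) * (k.*2.+1 - t) = (2 * j.+1 * (k - j)) * (2 * (k - j) - 1))%N.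
    have -> : (k.*2.+1 - t.+1 = 2 * (k - j) - 1)%N by lia.
    have -> : (k.*2.+1 - t = 2 * (k - j))%N by lia.
    ring.
  rewrite E1 E2; apply: leq_mul => //; lia.
- have E1 : (t.+1 * t.+2 * (k - j) = (2 * j.+1 * (k - j)) * (2 * j + 1))%N.
    by rewrite tj -mul2n /=; ring.
  have E2 : (j.+1 * (k.*2.+1 - t.+1) * (k.*2.+1 - t) = (2 * j.+1 * (k - j)) * (2 * (k - j) + 1))%N.
    have -> : (k.*2.+1 - t.+1 = 2 * (k - j))%N by lia.
    have -> : (k.*2.+1 - t = 2 * (k - j) + 1)%N by lia.
    ring.
  rewrite E1 E2; apply: leq_mul => //; lia.
Qed.

Lemma crude k t : (15 <= k)%N -> (7 <= t <= k.+1)%N ->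
  ((4*k+6) * (k.*2.+1 * 'C(k, t./2)) <= 'C(k.*2.+1, t))%N.
Proof.
move=> hk; elim/ltn_ind: t => t IH /andP[h7 h1].
have [->|n7] := eqVneq t 7; first exact: crudeS7.
have [->|n8] := eqVneq t 8; first exact: crudeS8.
have -> : t = (t - 2).+2 by lia.
apply: crude_step; first lia.
apply: IH; lia.
Qed.

Local Open Scope ring_scope.

Lemma FF_bounds k t : (15 <= k)%N -> (7 <= t <= k.+1)%N ->
  [/\ 0 <= FF k t,
      (4*k+6)%:Z * FF k t <= (4*k+7)%:Z * ('C(k.*2.+1, t))%:Z &
      (4*k+5)%:Z * ('C(k.*2.+1, t))%:Z <= (4*k+6)%:Z * FF k t].
Proof.
move=> hk ht; have := crude hk ht.
rewrite /FF sgnE; case: ifP => _ h; split; lia.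
Qed.

Lemma binP_id k i : (1 <= i <= k)%N ->
  ('C(k.*2.+1, i.-1) * 'C(k.*2.+1, i.+1) * (i.+1 * (k.*2.+1 - i.-1))
   = 'C(k.*2.+1, i) * 'C(k.*2.+1, i) * (i * (k.*2.+1 - i)))%N.
Proof.
move=> /andP[h1 h2].
have e1 := mul_bin_left k.*2.+1 i.-1.
have e2 := mul_bin_left k.*2.+1 i.
rewrite prednK // in e1.
have -> : ('C(k.*2.+1, i.-1) * 'C(k.*2.+1, i.+1) * (i.+1 * (k.*2.+1 - i.-1))
   = ((k.*2.+1 - i.-1) * 'C(k.*2.+1, i.-1)) * (i.+1 * 'C(k.*2.+1, i.+1)))%N by ring.
rewrite -e1 e2; ring.
Qed.

Lemma binP_lc k i : (1 <= i <= k)%N ->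
  ((4*k+7)^2 * ('C(k.*2.+1, i.-1) * 'C(k.*2.+1, i.+1))
    <= (4*k+5)^2 * ('C(k.*2.+1, i) * 'C(k.*2.+1, i)))%N.
Proof.
move=> hi; have e := binP_id hi.
have pos : (0 < i.+1 * (k.*2.+1 - i.-1))%N by rewrite muln_gt0; apply/andP; split; lia.
rewrite -(leq_pmul2r pos).
have -> : ((4*k+7)^2 * ('C(k.*2.+1, i.-1) * 'C(k.*2.+1, i.+1)) * (i.+1 * (k.*2.+1 - i.-1))
   = (4*k+7)^2 * ('C(k.*2.+1, i.-1) * 'C(k.*2.+1, i.+1) * (i.+1 * (k.*2.+1 - i.-1))))%N by ring.
rewrite e.
have -> : ((4*k+7)^2 * ('C(k.*2.+1, i) * 'C(k.*2.+1, i) * (i * (k.*2.+1 - i)))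
   = ((4*k+7)^2 * (i * (k.*2.+1 - i))) * ('C(k.*2.+1, i) * 'C(k.*2.+1, i)))%N by ring.
have -> : ((4*k+5)^2 * ('C(k.*2.+1, i) * 'C(k.*2.+1, i)) * (i.+1 * (k.*2.+1 - i.-1))
   = ((4*k+5)^2 * (i.+1 * (k.*2.+1 - i.-1))) * ('C(k.*2.+1, i) * 'C(k.*2.+1, i)))%N by ring.
apply: leq_mul (leqnn _).
move: hi => /andP[h1 h2].
have -> : (k.*2.+1 - i.-1 = (k.*2.+1 - i).+1)%N by lia.
set x := (i * (k.*2.+1 - i))%N.
have hx : (x <= k * k.+1)%N by rewrite /x; nia.
have hxe : (i.+1 * (k.*2.+1 - i).+1 = x + k.*2.+2)%N by rewrite /x; nia.
rewrite hxe.
have hx2 : ((16 * k + 24) * x <= (16 * k + 24) * (k * k.+1))%N by apply: leq_mul.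
have hy : ((16 * k + 24) * (k * k.+1) <= (4 * k + 5) ^ 2 * k.*2.+2)%N.
  have -> : ((16 * k + 24) * (k * k.+1) = (2 * k.+1) * ((8 * k + 12) * k))%N by ring.
  have -> : ((4 * k + 5) ^ 2 * k.*2.+2 = (2 * k.+1) * ((4 * k + 5) ^ 2))%N by rewrite -mul2n; ring.
  apply: leq_mul => //.
  have -> : ((4 * k + 5) ^ 2 = (8 * k + 12) * k + (8 * k * k + 28 * k + 25))%N by ring.
  exact: leq_addr.
have -> : ((4 * k + 7) ^ 2 * x = (4 * k + 5) ^ 2 * x + (16 * k + 24) * x)%N by ring.
rewrite mulnDr leq_add2l; exact: leq_trans hx2 hy.
Qed.

Lemma lc_large k i : (15 <= k)%N -> (8 <= i <= k)%N ->
  FF k i.-1 * FF k i.+1 <= FF k i ^+ 2.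
Proof.
move=> hk hi.
have hi1 : (7 <= i.-1 <= k.+1)%N by lia.
have hi2 : (7 <= i.+1 <= k.+1)%N by lia.
have hi3 : (7 <= i <= k.+1)%N by lia.
have hi4 : (1 <= i <= k)%N by lia.
have [a0 a1 a2] := FF_bounds hk hi1.
have [b0 b1 b2] := FF_bounds hk hi2.
have [c0 c1 c2] := FF_bounds hk hi3.
have h3 := binP_lc hi4.
set L := (4*k+6)%:Z.
have Lpos : 0 < L * L by rewrite /L; nia.
rewrite -(ler_pM2l Lpos) expr2.
have hab : L * FF k i.-1 * (L * FF k i.+1) <=
   (4*k+7)%:Z * ('C(k.*2.+1, i.-1))%:Z * ((4*k+7)%:Z * ('C(k.*2.+1, i.+1))%:Z).
  apply: ler_pM => //; rewrite /L; lia.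
have hc : (4*k+5)%:Z * ('C(k.*2.+1, i))%:Z * ((4*k+5)%:Z * ('C(k.*2.+1, i))%:Z) <=
   L * FF k i * (L * FF k i).
  apply: ler_pM => //; lia.
lia.
Qed.

Lemma FF_sym k i : odd k -> (i <= k.*2.+1)%N -> FF k (k.*2.+1 - i) = FF k i.
Proof.
move=> hk hi; rewrite /FF /sgn bin_sub //.
have -> : ((k.*2.+1 - i)./2 = k - i./2)%N by lia.
rewrite bin_sub; last by lia.
rewrite -(signr_odd _ ((k - i./2) + odd (k.*2.+1 - i))) -(signr_odd _ (i./2 + odd i)).
have -> : odd ((k - i./2) + odd (k.*2.+1 - i)) = odd (i./2 + odd i) by lia.
done.
Qed.

Lemma FF0 k : FF k 0 = (k.*2.+2)%:Z.
Proof. rewrite /FF /sgn /= bin0 bin0 expr0 mul1r; lia. Qed.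

Lemma FF1 k : FF k 1 = 0.
Proof. rewrite /FF /sgn /= bin1 bin0 expr1; lia. Qed.

Lemma FF2 k : FF k 2 = 0.
Proof.
rewrite /FF /sgn /= bin1 expr1 bin2.
have -> : (k.*2.+1 * (k.*2.+1).-1)./2 = (k.*2.+1 * k)%N.
  rewrite /= -doubleMr; exact: doubleK.
lia.
Qed.

Lemma FF_pos k i : (15 <= k)%N -> (3 <= i <= k.+1)%N -> 0 < FF k i.
Proof.
move=> hk hi.
have [->|n3] := eqVneq i 3; first exact: posS3.
have [->|n4] := eqVneq i 4; first exact: posS4.
have [->|n5] := eqVneq i 5; first exact: posS5.
have [->|n6] := eqVneq i 6; first exact: posS6.
have hi7 : (7 <= i <= k.+1)%N by lia.
have [_ _ h] := FF_bounds hk hi7.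
have : (0 < 'C(k.*2.+1, i))%N by rewrite bin_gt0; lia.
lia.
Qed.

Lemma FF_lc k i : (15 <= k)%N -> (4 <= i <= k)%N ->
  FF k i.-1 * FF k i.+1 <= FF k i ^+ 2.
Proof.
move=> hk hi.
have [->|n4] := eqVneq i 4; first exact: lcS4.
have [->|n5] := eqVneq i 5; first exact: lcS5.
have [->|n6] := eqVneq i 6; first exact: lcS6.
have [->|n7] := eqVneq i 7; first exact: lcS7.
apply: lc_large => //; lia.
Qed.

Lemma FF_even k j : FF k j.*2 = ('C(k.*2.+1, j.*2))%:Z + (-1) ^+ j * ((k.*2.+1) * 'C(k, j))%:Z.
Proof. by rewrite /FF /sgn half_double odd_double addn0. Qed.

Lemma FF_odd k j : FF k j.*2.+1 = ('C(k.*2.+1, j.*2.+1))%:Z - (-1) ^+ j * ((k.*2.+1) * 'C(k, j))%:Z.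
Proof.
rewrite /FF /sgn.
have -> : ((j.*2.+1)./2 + odd (j.*2.+1) = j.+1)%N by lia.
have -> : ((j.*2.+1)./2 = j)%N by lia.
by rewrite exprS mulN1r mulNr.
Qed.

Lemma FF_rec_odd k j : (j.*2.+3 <= k.*2.+1)%N ->
  (j.*2.+3)%:Z * FF k j.*2.+3 + FF k j.*2.+2 + (k.*2.+1 - j.*2.+1)%:Z * FF k j.*2.+1
  = (k.*2.+2)%:Z * ('C(k.*2.+1, j.*2.+2))%:Z.
Proof.
move=> h.
have [d ->] : exists d, k = (j + d.+1)%N by exists (k - j.+1)%N; lia.
set s := (-1 : int) ^+ j.
have f3 : FF (j + d.+1) j.*2.+3 = ('C((j + d.+1).*2.+1, j.*2.+3))%:Z + s * (((j + d.+1).*2.+1) * 'C(j + d.+1, j.+1))%:Z.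
  by rewrite -doubleS FF_odd doubleS exprS -/s; ring.
have f2 : FF (j + d.+1) j.*2.+2 = ('C((j + d.+1).*2.+1, j.*2.+2))%:Z - s * (((j + d.+1).*2.+1) * 'C(j + d.+1, j.+1))%:Z.
  by rewrite -doubleS FF_even doubleS exprS -/s; ring.
have f1 : FF (j + d.+1) j.*2.+1 = ('C((j + d.+1).*2.+1, j.*2.+1))%:Z - s * (((j + d.+1).*2.+1) * 'C(j + d.+1, j))%:Z.
  by rewrite FF_odd -/s.
rewrite f3 f2 f1.
have b2 := mul_bin_left (j + d.+1).*2.+1 j.*2.+2.
have b0 := mul_bin_left (j + d.+1).*2.+1 j.*2.+1.
have c := mul_bin_left (j + d.+1) j.
have -> : ((j + d.+1).*2.+1 - j.*2.+1 = d.*2.+2)%N by lia.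
have e1 : ((j + d.+1).*2.+1 - j.*2.+2 = d.*2.+1)%N by lia.
have e2 : ((j + d.+1).*2.+1 - j.*2.+1 = d.*2.+2)%N by lia.
have e3 : ((j + d.+1) - j = d.+1)%N by lia.
rewrite e1 in b2; rewrite e2 in b0; rewrite e3 in c.
have c' := congr1 (fun x : nat => s * ((j + d.+1).*2.+1)%:Z * x%:Z) c.
rewrite /= in c'.
lia.
Qed.

Lemma FF_rec_even k j : (j.*2.+2 <= k.*2.+1)%N ->
  (j.*2.+2)%:Z * FF k j.*2.+2 + FF k j.*2.+1 + (k.*2.+1 - j.*2)%:Z * FF k j.*2
  = (k.*2.+2)%:Z * ('C(k.*2.+1, j.*2.+1))%:Z.
Proof.
move=> h.
have [d ->] : exists d, k = (j + d.+1)%N by exists (k - j.+1)%N; lia.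
set s := (-1 : int) ^+ j.
have f2 : FF (j + d.+1) j.*2.+2 = ('C((j + d.+1).*2.+1, j.*2.+2))%:Z - s * (((j + d.+1).*2.+1) * 'C(j + d.+1, j.+1))%:Z.
  by rewrite -doubleS FF_even doubleS exprS -/s; ring.
have f1 : FF (j + d.+1) j.*2.+1 = ('C((j + d.+1).*2.+1, j.*2.+1))%:Z - s * (((j + d.+1).*2.+1) * 'C(j + d.+1, j))%:Z.
  by rewrite FF_odd -/s.
have f0 : FF (j + d.+1) j.*2 = ('C((j + d.+1).*2.+1, j.*2))%:Z + s * (((j + d.+1).*2.+1) * 'C(j + d.+1, j))%:Z.
  by rewrite FF_even -/s.
rewrite f2 f1 f0.
have b2 := mul_bin_left (j + d.+1).*2.+1 j.*2.+1.
have b0 := mul_bin_left (j + d.+1).*2.+1 j.*2.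
have c := mul_bin_left (j + d.+1) j.
have -> : ((j + d.+1).*2.+1 - j.*2 = d.*2.+3)%N by lia.
have e1 : ((j + d.+1).*2.+1 - j.*2.+1 = d.*2.+2)%N by lia.
have e2 : ((j + d.+1).*2.+1 - j.*2 = d.*2.+3)%N by lia.
have e3 : ((j + d.+1) - j = d.+1)%N by lia.
rewrite e1 in b2; rewrite e2 in b0; rewrite e3 in c.
have c' := congr1 (fun x : nat => s * ((j + d.+1).*2.+1)%:Z * x%:Z) c.
rewrite /= in c'.
lia.
Qed.

Lemma FF_rec k i : (i.+2 <= k.*2.+1)%N ->
  (i.+2)%:Z * FF k i.+2 + FF k i.+1 + (k.*2.+1 - i)%:Z * FF k i
  = (k.*2.+2)%:Z * ('C(k.*2.+1, i.+1))%:Z.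
Proof.
move=> hi.
have := odd_double_half i; case: (odd i) => /= ei; rewrite -ei in hi *.
- exact: FF_rec_odd.
- rewrite add0n in hi *; exact: FF_rec_even.
Qed.


Local Close Scope ring_scope.
Local Open Scope ring_scope.

Lemma F2_cases (a : 'F_2) : a = 0 \/ a = 1.
Proof. case: a => [[|[|n]]] //= H; [left|right]; exact: val_inj. Qed.

Lemma F2_addrr (a : 'F_2) : a + a = 0.
Proof. case: (F2_cases a) => ->; [by rewrite addr0 | exact: val_inj]. Qed.

Lemma F2_opp (a : 'F_2) : - a = a.
Proof. by apply: (addrI a); rewrite subrr F2_addrr. Qed.

Lemma F2_one_neq0 : (1 : 'F_2) != 0.
Proof. by []. Qed.

Lemma F2_natr (b : bool) : ((b : nat)%:R : 'F_2) = (if b then 1 else 0).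
Proof. by case: b. Qed.

Lemma bits_inj m a b : (a < 2 ^ m)%N -> (b < 2 ^ m)%N ->
  (forall i, (i < m)%N -> odd (a %/ 2 ^ i) = odd (b %/ 2 ^ i)) -> a = b.
Proof.
elim: m a b => [|m IH] a b ha hb h.
  by rewrite expn0 in ha hb; lia.
have h0 := h 0%N (ltn0Sn _); rewrite expn0 !divn1 in h0.
have e : (a %/ 2 = b %/ 2)%N.
  apply: IH; first by rewrite expnS in ha; lia.
    by rewrite expnS in hb; lia.
  move=> i hi; rewrite -!divnMA -expnS; exact: h.
move: e h0; rewrite !divn2; lia.
Qed.

Definition syn (m : nat) (x : 'rV['F_2]_(2 ^ m - 1)) : 'rV['F_2]_m := x *m (hamming_pcm m)^T.
Definition ev (n : nat) (j : 'I_n) : 'rV['F_2]_n := delta_mx 0 j.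
Definition hcol (m : nat) (j : 'I_(2 ^ m - 1)) : 'rV['F_2]_m := syn (ev j).

Lemma hcolE (m : nat) (j : 'I_(2 ^ m - 1)) (i : 'I_m) : hcol j 0 i = ((odd ((j.+1) %/ 2 ^ i) : nat)%:R : 'F_2).
Proof. by rewrite /hcol /syn /ev -rowE !mxE. Qed.

Lemma F2_natr_inj (b c : bool) : ((b : nat)%:R : 'F_2) = (c : nat)%:R -> b = c.
Proof. by case: b; case: c => // /eqP; rewrite ?oner_eq0 // eq_sym oner_eq0. Qed.

Lemma hcol_inj (m : nat) : injective (@hcol m).
Proof.
move=> j j' e; apply/val_inj/eq_add_S.
have hj : (val j < 2 ^ m - 1)%N by exact: ltn_ord.
have hj' : (val j' < 2 ^ m - 1)%N by exact: ltn_ord.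
apply: (@bits_inj m); first (by lia); first (by lia).
move=> i hi; apply: F2_natr_inj.
by rewrite -!(hcolE _ (Ordinal hi)) e.
Qed.

Lemma hcol_neq0 (m : nat) (j : 'I_(2 ^ m - 1)) : @hcol m j != 0.
Proof.
apply/negP => /eqP e.
have : j.+1 = 0%N; last by [].
have hj : (j < 2 ^ m - 1)%N := ltn_ord j.
apply: (@bits_inj m); first (by lia); first (by rewrite expn_gt0).
move=> i hi; apply: F2_natr_inj.
by rewrite -(hcolE _ (Ordinal hi)) e div0n !mxE.
Qed.

Lemma hcol_surj (m : nat) (v : 'rV['F_2]_m) : v != 0 -> exists j, @hcol m j = v.
Proof.
move=> nz.
set I := [set @hcol m j | j : 'I_(2 ^ m - 1)].
set S := [set w : 'rV['F_2]_m | w != 0].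
have sub : I \subset S.
  by apply/subsetP => w /imsetP [j _ ->]; rewrite inE hcol_neq0.
have cI : #|I| = (2 ^ m - 1)%N by rewrite card_imset ?card_ord //; exact: hcol_inj.
have cS : #|S| = (2 ^ m - 1)%N.
  have -> : S = [set~ 0] by apply/setP => w; rewrite !inE.
  by rewrite cardsC1 card_mx card_Fp // mul1n subn1.
have eIS : I = S by apply/eqP; rewrite eqEcard sub cI cS leqnn.
have : v \in I by rewrite eIS inE.
by case/imsetP => j _ ->; exists j.
Qed.

Lemma sum_hcol (m : nat) (v : 'rV['F_2]_m) :
  (\sum_(j : 'I_(2 ^ m - 1)) (v == hcol j : nat) = (v != 0%R : nat))%N.
Proof.
have [->|nz] := eqVneq v 0.
  by rewrite big1 // => j _; rewrite eq_sym (negbTE (hcol_neq0 j)).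
have [j0 e] := hcol_surj nz.
rewrite (bigD1 j0) //= -e eqxx big1 // => j nj.
by rewrite (inj_eq (@hcol_inj m)) eq_sym (negbTE nj).
Qed.

Lemma ev_entry (n : nat) (j l : 'I_n) : ev j ord0 l = (l == j)%:R.
Proof. by rewrite /ev mxE eqxx. Qed.

Lemma F2_neq0 (a : 'F_2) : (a != 0) = (a == 1).
Proof. by case: (F2_cases a) => ->. Qed.

Lemma hweight_add_ev (n : nat) (x : 'rV['F_2]_n) (j : 'I_n) :
  hweight (x + ev j) = if x ord0 j != 0 then (hweight x).-1 else (hweight x).+1.
Proof.
rewrite /hweight; set S := [set l | x ord0 l != 0].
case: ifP => h.
- have -> : [set l | (x + ev j) ord0 l != 0] = S :\ j.
    apply/setP => l; rewrite !inE mxE ev_entry.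
    have [->|nlj] := eqVneq l j.
      by move: h; rewrite !F2_neq0 => /eqP ->.
    by rewrite addr0.
  by rewrite (cardsD1 j S) inE h.
- have -> : [set l | (x + ev j) ord0 l != 0] = j |: S.
    apply/setP => l; rewrite !inE mxE ev_entry.
    have [->|nlj] := eqVneq l j.
      by move/negbFE: h => /eqP ->; rewrite add0r oner_neq0.
    by rewrite addr0.
  by rewrite cardsU1 inE h.
Qed.

Definition supp (n : nat) (x : 'rV['F_2]_n) : {set 'I_n} := [set l | x ord0 l != 0].

Lemma supp_inj (n : nat) : injective (@supp n).
Proof.
move=> x y /setP e; apply/rowP => l.
have := e l; rewrite !inE !F2_neq0.
by case: (F2_cases (x ord0 l)) => ->; case: (F2_cases (y ord0 l)) => -> //.
Qed.

Lemma card_weight (n w : nat) : #|[set x : 'rV['F_2]_n | hweight x == w]| = 'C(n, w).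
Proof.
rewrite -(card_imset _ (@supp_inj n)).
have -> : [set supp x | x in [set x : 'rV['F_2]_n | hweight x == w]] = [set A : {set 'I_n} | #|A| == w].
  apply/setP => A; rewrite inE; apply/imsetP/idP.
    by case=> x; rewrite inE => hx ->.
  move=> hA; exists (\row_l ((l \in A) : nat)%:R : 'rV['F_2]_n).
    rewrite inE /hweight.
    suff -> : [set j | (\row_l ((l \in A) : nat)%:R : 'rV['F_2]_n) ord0 j != 0] = A by [].
    by apply/setP => l; rewrite !inE mxE; case: (l \in A) => //=; rewrite oner_neq0.
  by apply/setP => l; rewrite !inE mxE; case: (l \in A) => //=; rewrite oner_neq0.
by rewrite card_draws card_ord.
Qed.

Lemma mx_oppF2 (p q : nat) (v : 'M['F_2]_(p, q)) : - v = v.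
Proof. by apply/matrixP => i j; rewrite mxE F2_opp. Qed.

Lemma mx_addrrF2 (p q : nat) (v : 'M['F_2]_(p, q)) : v + v = 0.
Proof. by rewrite -{2}(mx_oppF2 v) subrr. Qed.

Lemma in_codeE (m : nat) x : (x \in hamming_code m) = (syn x == 0).
Proof. by rewrite inE. Qed.

Lemma in_code_add_ev (m : nat) (x : 'rV['F_2]_(2 ^ m - 1)) j :
  (x + ev j \in hamming_code m) = (syn x == hcol j).
Proof. by rewrite in_codeE /syn mulmxDl addr_eq0 mx_oppF2. Qed.

Local Close Scope ring_scope.

Lemma one_split (m : nat) (x : 'rV['F_2]_(2 ^ m - 1)) :
  (x \in hamming_code m) + \sum_(j : 'I_(2 ^ m - 1)) ((x + ev j)%R \in hamming_code m) = 1.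
Proof.
under eq_bigr => j _ do rewrite in_code_add_ev.
by rewrite sum_hcol in_codeE; case: (syn x == 0%R).
Qed.

Lemma card_set_sum (T : finType) (P : pred T) : #|[set x | P x]| = \sum_x P x.
Proof.
rewrite -sum1_card big_mkcond /=; apply: eq_bigr => x _; rewrite inE.
by case: (P x).
Qed.

Lemma sum_ev (n : nat) (y : 'rV['F_2]_n) w :
  \sum_(j : 'I_n) (hweight (y + ev j)%R == w)
  = hweight y * ((hweight y).-1 == w) + (n - hweight y) * ((hweight y).+1 == w).
Proof.
under eq_bigr => j _ do rewrite hweight_add_ev.
rewrite (bigID (fun j => y ord0 j != 0%R)) /=.
under eq_bigr => j hj do rewrite hj.
under [X in _ + X = _]eq_bigr => j hj do rewrite (negbTE hj).
rewrite !sum_nat_cond_const.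
congr (_ * _ + _ * _); rewrite /hweight //.
have -> : [set x | ~~ (y ord0 x != 0%R)] = ~: [set j | y ord0 j != 0%R]
  by apply/setP => j; rewrite !inE.
have := cardsC [set j | y ord0 j != 0%R]; rewrite card_ord; lia.
Qed.

Lemma wc_sum (n : nat) (C : {set 'rV['F_2]_n}) w :
  weight_count C w = \sum_x ((x \in C) * (hweight x == w)).
Proof.
rewrite /weight_count card_set_sum; apply: eq_bigr => x _.
by rewrite mulnb.
Qed.

Lemma hw_pred_eq h w : h * (h.-1 == w) = w.+1 * (h == w.+1).
Proof.
case: h => [|h] /=; first by rewrite muln0.
rewrite eqSS; case: eqP => [->|]; by rewrite ?muln1 ?muln0.
Qed.

Lemma count_rec (m w : nat) :
  'C(2 ^ m - 1, w) = weight_count (hamming_code m) w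
     + w.+1 * weight_count (hamming_code m) w.+1
     + \sum_y ((y \in hamming_code m) * ((2 ^ m - 1 - hweight y) * ((hweight y).+1 == w))).
Proof.
set N := (2 ^ m - 1).
set C := hamming_code m.
rewrite -card_weight card_set_sum.
transitivity (\sum_(x : 'rV['F_2]_N) (hweight x == w) *
               ((x \in C) + \sum_(j : 'I_N) ((x + ev j)%R \in C))).
  by apply: eq_bigr => x _; rewrite one_split muln1.
rewrite (eq_bigr (fun x : 'rV['F_2]_N => (hweight x == w) * (x \in C) + \sum_(j : 'I_N) (hweight x == w) * ((x + ev j)%R \in C))); last first.
  by move=> x _; rewrite mulnDr big_distrr.
rewrite big_split /= exchange_big /=.
rewrite wc_sum.
under eq_bigr => x _ do rewrite mulnC.
rewrite -addnA; congr (_ + _).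
transitivity (\sum_(j : 'I_N) \sum_(y : 'rV['F_2]_N) (y \in C) * (hweight (y + ev j)%R == w)).
  apply: eq_bigr => j _.
  rewrite (reindex_inj (addIr (ev j))) /=.
  apply: eq_bigr => y _.
  by rewrite -addrA mx_addrrF2 addr0 mulnC.
rewrite exchange_big /=.
under eq_bigr => y _ do rewrite -big_distrr /= sum_ev hw_pred_eq.
under eq_bigr => y _ do rewrite mulnDr.
rewrite big_split /=; congr (_ + _).
rewrite wc_sum big_distrr /=; apply: eq_bigr => y _.
by rewrite mulnCA.
Qed.

Lemma rec0 (m : nat) :
  1 = weight_count (hamming_code m) 0 + weight_count (hamming_code m) 1.
Proof.
have := count_rec m 0; rewrite bin0 mul1n big1 ?addn0 // => y _.
by rewrite (_ : ((hweight y).+1 == 0) = false) // !muln0.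
Qed.

Lemma recS (m i : nat) :
  'C(2 ^ m - 1, i.+1) = weight_count (hamming_code m) i.+1
     + i.+2 * weight_count (hamming_code m) i.+2
     + (2 ^ m - 1 - i) * weight_count (hamming_code m) i.
Proof.
rewrite count_rec; congr (_ + _).
rewrite wc_sum big_distrr /=; apply: eq_bigr => y _.
rewrite eqSS; case: eqP => [->|]; by rewrite ?muln0 ?muln1 ?mul0n // mulnC.
Qed.

Lemma hweight_eq0 (n : nat) (x : 'rV['F_2]_n) : (hweight x == 0) = (x == 0%R).
Proof.
rewrite /hweight cards_eq0; apply/eqP/eqP => [e|->].
  apply: (@supp_inj n); rewrite /supp e; apply/setP => l; rewrite !inE mxE eqxx //.
by apply/setP => l; rewrite !inE mxE eqxx.
Qed.

Lemma a0 (m : nat) : weight_count (hamming_code m) 0 = 1.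
Proof.
rewrite /weight_count.
have -> : [set x in hamming_code m | hweight x == 0] = [set 0%R].
  apply/setP => x; rewrite !inE hweight_eq0.
  have [->|nx] := eqVneq x 0%R; last by rewrite andbF.
  by rewrite mul0mx eqxx.
by rewrite cards1.
Qed.


Local Close Scope ring_scope.
Local Open Scope ring_scope.

Lemma a_eq_FF (m k : nat) : (2 ^ m - 1 = k.*2.+1)%N ->
  forall i, (i <= 2 ^ m - 1)%N ->
  (k.*2.+2)%:Z * (weight_count (hamming_code m) i)%:Z = FF k i.
Proof.
move=> hN.
set a := weight_count (hamming_code m).
suff H : forall i, (i.+1 <= 2 ^ m - 1)%N ->
  (k.*2.+2)%:Z * (a i)%:Z = FF k i /\ (k.*2.+2)%:Z * (a i.+1)%:Z = FF k i.+1.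
  have h1 : (1 <= 2 ^ m - 1)%N by rewrite hN.
  move=> [|i] hi; first by case: (H 0%N h1).
  by case: (H i hi).
elim=> [|i IH] hi.
  have h0 := a0 m; have h1 := rec0 m.
  rewrite FF0 FF1 -/a in h0 h1 *.
  split; lia.
have [P0 P1] := IH (ltnW hi).
split => //.
have r := recS m i; rewrite -/a hN in r.
have hi2 : (i.+2 <= k.*2.+1)%N by rewrite -hN.
have f := FF_rec hi2.
have r' := congr1 (fun x : nat => (k.*2.+2)%:Z * x%:Z) r.
have P0' := congr1 (fun x : int => (k.*2.+1 - i)%:Z * x) P0.
rewrite /= in r' P0'.
have e : (i.+2)%:Z * ((k.*2.+2)%:Z * (a i.+2)%:Z) = (i.+2)%:Z * FF k i.+2.
  have : (k.*2.+1 - i)%:Z = (k.*2.+1)%:Z - i%:Z by rewrite hN in hi; lia.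
  lia.
apply: (mulfI (_ : (i.+2)%:Z != 0)) => //.
Qed.


Local Close Scope ring_scope.
Local Open Scope ring_scope.

Lemma cancel_eq (c x y : nat) : (0 < c)%N -> c%:Z * x%:Z = c%:Z * y%:Z -> x = y.
Proof.
move=> hc h; apply/eqP; rewrite -(eqn_pmul2l hc); apply/eqP.
by apply/eqP; rewrite -eqz_nat !PoszM h.
Qed.

Lemma cancel_lc (c x y z : nat) : (0 < c)%N ->
  (c%:Z * x%:Z) * (c%:Z * y%:Z) <= (c%:Z * z%:Z) ^+ 2 -> (x * y <= z ^ 2)%N.
Proof.
move=> hc h.
have hc2 : (0 < c * c)%N by rewrite muln_gt0 hc.
rewrite -(leq_pmul2l hc2) -lez_nat !PoszM.
have -> : (c%:Z * c%:Z) * (x%:Z * y%:Z) = (c%:Z * x%:Z) * (c%:Z * y%:Z) by ring.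
have -> : (c%:Z * c%:Z) * (z ^ 2)%N%:Z = (c%:Z * z%:Z) ^+ 2 by rewrite -mulnn PoszM expr2; ring.
exact: h.
Qed.

Lemma cancel_pos (c x : nat) : 0 < c%:Z * x%:Z -> (0 < x)%N.
Proof. by move=> h; rewrite lt0n; apply/eqP => e; move: h; rewrite e mulr0. Qed.

Section Gen.
End Gen.

Lemma general (m k : nat) : (2 ^ m - 1 = k.*2.+1)%N -> odd k -> (3 <= k)%N ->
  (forall i, (3 <= i <= k.+1)%N -> 0 < FF k i) ->
  (forall i, (4 <= i <= k)%N -> FF k i.-1 * FF k i.+1 <= FF k i ^+ 2) ->
  (k.*2.+2)%:Z * FF k 4 <= FF k 3 ^+ 2 ->
  log_concave_code (hamming_code m).
Proof.
move=> hN ko k3 Hpos Hlc Hend.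
set a := weight_count (hamming_code m).
set N := (2 ^ m - 1)%N.
have c0 : (0 < k.*2.+2)%N by [].
have aF : forall i, (i <= k.*2.+1)%N -> (k.*2.+2)%:Z * (a i)%:Z = FF k i.
  by move=> i hi; apply: a_eq_FF; rewrite // hN.
have asym : forall i, (i <= k.*2.+1)%N -> a (k.*2.+1 - i)%N = a i.
  move=> i hi; apply: (@cancel_eq (k.*2.+2)) => //.
  by rewrite aF ?leq_subr // aF // FF_sym.
have a1 : a 1%N = 0%N.
  by apply: (@cancel_eq (k.*2.+2)) => //; rewrite aF // FF1 mulr0.
have a2 : a 2%N = 0%N.
  by apply: (@cancel_eq (k.*2.+2)) => //; rewrite aF ?FF2 ?mulr0 //; lia.
have aN : a (k.*2.+1) = 1%N.
  by rewrite -[X in a X]subn0 asym // /a a0.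
have aN1 : a (k.*2.+1 - 1)%N = 0%N by rewrite asym.
have aN2 : a (k.*2.+1 - 2)%N = 0%N by rewrite asym //; lia.
have apos : forall i, (3 <= i <= k.*2.+1 - 3)%N -> (0 < a i)%N.
  move=> i hi.
  have [hik|hik] := leqP i k.+1.
    by apply: (@cancel_pos (k.*2.+2)); rewrite aF ?Hpos //; lia.
  rewrite -asym; last by lia.
  by apply: (@cancel_pos (k.*2.+2)); rewrite aF ?Hpos //; lia.
have alc : forall i, (4 <= i <= k)%N -> (a i.-1 * a i.+1 <= a i ^ 2)%N.
  move=> i hi; apply: (@cancel_lc (k.*2.+2)) => //.
  rewrite !aF; try lia; exact: Hlc.
have alc' : forall i, (4 <= i <= k.*2.+1 - 4)%N -> (a i.-1 * a i.+1 <= a i ^ 2)%N.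
  move=> i hi.
  have [hik|hik] := leqP i k; first by apply: alc; lia.
  have e1 : a i.-1 = a (k.*2.+1 - i).+1 by rewrite -asym; [congr a; lia | lia].
  have e2 : a i.+1 = a (k.*2.+1 - i).-1 by rewrite -asym; [congr a; lia | lia].
  have e3 : a i = a (k.*2.+1 - i)%N by rewrite asym //; lia.
  rewrite e1 e2 e3 mulnC; apply: alc; lia.
have aend : (a 4 <= a 3 ^ 2)%N.
  have := @cancel_lc (k.*2.+2) 1 (a 4) (a 3) c0.
  rewrite mul1n; apply.
  by rewrite mulr1 !aF //; lia.
rewrite /log_concave_code.
have a0' : a 0%N = 1%N := a0 m.
have hsplit : iota 0 (2 ^ m - 1).+1 = iota 0 3 ++ iota 3 (k.*2.+1 - 5) ++ iota (k.*2.+1 - 2) 3.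
  rewrite hN (_ : (k.*2.+1 - 2 = 3 + (k.*2.+1 - 5))%N); last by lia.
  rewrite -iotaD -iotaD; congr iota; lia.
have hlist : nonzero_weight_distribution (hamming_code m)
    = 1%N :: [seq a i | i <- iota 3 (k.*2.+1 - 5)] ++ [:: 1%N].
  rewrite /nonzero_weight_distribution -/a hsplit !map_cat !filter_cat.
  have -> : [seq x <- [seq a i | i <- iota 0 3] | x != 0%N] = [:: 1%N] by rewrite /= a0' a1 a2.
  have -> : [seq a i | i <- iota (k.*2.+1 - 2) 3] = [:: a (k.*2.+1 - 2)%N; a (k.*2.+1 - 1)%N; a k.*2.+1].
    by rewrite /=; congr [:: _; a _; a _]; lia.
  have -> : [seq x <- [:: a (k.*2.+1 - 2)%N; a (k.*2.+1 - 1)%N; a k.*2.+1] | x != 0%N] = [:: 1%N].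
    by rewrite /= aN2 aN1 aN.
  have -> : [seq x <- [seq a i | i <- iota 3 (k.*2.+1 - 5)] | x != 0%N] = [seq a i | i <- iota 3 (k.*2.+1 - 5)].
    apply/all_filterP/allP => x /mapP [i]; rewrite mem_iota => hi ->.
    by rewrite -lt0n apos //; lia.
  by [].
rewrite hlist.
set s := [seq a i | i <- iota 3 (k.*2.+1 - 5)].
have ss : size s = (k.*2.+1 - 5)%N by rewrite size_map size_iota.
have nthE : forall t, (1 <= t <= k.*2.+1 - 5)%N -> nth 0%N (1%N :: s ++ [:: 1%N]) t = a t.+2.
  move=> [|t] ht //=; rewrite nth_cat ss ifT; last by lia.
  rewrite (nth_map 0%N) ?size_iota; last by lia.
  by rewrite nth_iota; [congr a; lia | lia].
have nthL : nth 0%N (1%N :: s ++ [:: 1%N]) (k.*2.+1 - 4) = 1%N.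
  have -> : (k.*2.+1 - 4 = (k.*2.+1 - 5).+1)%N by lia.
  by rewrite /= nth_cat ss ltnn subnn.
move=> i i0 isz.
rewrite /= size_cat ss /= in isz.
have [->|i1] := eqVneq i 1%N.
  rewrite (nthE 1%N) ?(nthE 2%N); try lia.
  have -> : nth 0%N (1%N :: s ++ [:: 1%N]) 1.-1 = 1%N by [].
  by rewrite mul1n.
have [eL|iL] := eqVneq i (k.*2.+1 - 5)%N.
  rewrite eL.
  have -> : (k.*2.+1 - 5).+1 = (k.*2.+1 - 4)%N by lia.
  rewrite nthL muln1 !nthE; try lia.
  have -> : (k.*2.+1 - 5).-1.+2 = (k.*2.+1 - 4)%N by lia.
  have -> : (k.*2.+1 - 5).+2 = (k.*2.+1 - 3)%N by lia.
  by rewrite !asym //; lia.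
rewrite !nthE; try lia.
have hi2 : (4 <= i.+2 <= k.*2.+1 - 4)%N by lia.
have := alc' i.+2 hi2.
have -> : i.-1.+2 = i.+2.-1 by lia.
done.
Qed.


Local Close Scope ring_scope.
Local Open Scope ring_scope.

Lemma k3_pos i : (3 <= i <= 4)%N -> 0 < FF 3 i.
Proof. by case/andP; case: i => [|[|[|[|[|i]]]]] //. Qed.

Lemma k3_end : (3.*2.+2)%:Z * FF 3 4 <= FF 3 3 ^+ 2.
Proof. by []. Qed.

Theorem mainTheorem1 (m : nat) (hm : m = 3%N \/ (5 <= m)%N) :
  log_concave_code (hamming_code m).
Proof.
have hm3 : (3 <= m)%N by case: hm => [->|]; lia.
set k := (2 ^ (m - 1) - 1)%N.
have e1 : (2 ^ m = 2 * 2 ^ (m - 1))%N by rewrite -expnS; congr expn; lia.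
have e2 : (2 ^ (m - 1) = 4 * 2 ^ (m - 3))%N.
  by rewrite (_ : 4 = 2 ^ 2)%N // -expnD; congr expn; lia.
have p3 : (0 < 2 ^ (m - 3))%N by rewrite expn_gt0.
have hN : (2 ^ m - 1 = k.*2.+1)%N by rewrite /k; lia.
have ko : odd k by rewrite /k; lia.
have k3 : (3 <= k)%N by rewrite /k; lia.
case: hm => [em|hm5].
  have ek : k = 3%N by rewrite /k em.
  rewrite ek in hN ko k3 *.
  apply: (general hN ko k3 k3_pos _ k3_end).
  by move=> i; case/andP => h1 h2; have := leq_trans h1 h2.
have k15 : (15 <= k)%N.
  have : (2 ^ 4 <= 2 ^ (m - 1))%N by rewrite leq_exp2l //; lia.
  rewrite /k; lia.
apply: (general hN ko k3 _ _ (endS k15)).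
- by move=> i hi; apply: FF_pos.
- by move=> i hi; apply: FF_lc.
Qed.
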